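(* Let $t\geq 1$, $l\geq 1$, and let $C_1,\ldots,C_l$ be fans with $C_i=\{a_{i,1},\ldots,a_{i,m}\}$, simultaneously grounded by a curve $\gamma=\gamma_1\cup\cdots\cup\gamma_m$. If each $a_{i,j}$ intersects $\gamma$ in at most $t$ points, then there are indices $j_1<\cdots<j_r$ with $r=\lfloor\log^{(2l)}_{t+1}m\rfloor$ (the $2l$-times iterated base-$(t+1)$ logarithm) and a subcurve $\gamma'=\gamma'_1\cup\cdots\cup\gamma'_r\subseteq\gamma$ such that (1) the subfans $C'_i=\{a_{i,j_1},\ldots,a_{i,j_r}\}\subseteq C_i$, $1\leq i\leq l$, are simultaneously well-grounded by $\gamma'_1\cup\cdots\cup\gamma'_r$, and (2) $\gamma'_s\supseteq\gamma_{j_s}$ for $1\leq s\leq r$.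
   Context: All curves are simple; no two curves are tangent (a shared interior point is a proper crossing). A fan with apex $v$ is a collection of curves with common endpoint $v$. Let $\gamma$ be a curve with endpoints $p,q$, partitioned into subcurves $\gamma_1,\ldots,\gamma_m$ appearing in this order along $\gamma$ from $p$ to $q$ (consecutive pieces sharing an endpoint). A fan $C=\{a_1,\ldots,a_m\}$ with apex $v$ is grounded by $\gamma_1\cup\cdots\cup\gamma_m$ if $v\notin\gamma$ and each $a_i$ has its other endpoint on $\gamma_i$; well-grounded if in addition each $a_i$ intersects $\gamma$ only within $\gamma_i$. Several fans are simultaneously (well-)grounded by $\gamma_1\cup\cdots\cup\gamma_m$ if each is (well-)grounded with respect to the same partition. *)

(* Defs.v *)
From Stdlib Require Import Reals Lra Lia List ZArith.
Open Scope R_scope.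

(* A (parametrized) curve; the curve itself is its image of [0,1]. *)
Definition curve := R -> R * R.

Definition curve_pts (c : curve) (a b : R) : R * R -> Prop :=
  fun x => exists s, a <= s <= b /\ c s = x.

(* Simple curve: continuous (extended to all of R; any continuous map on
   [0,1] extends) and injective on [0,1]. Endpoints are c 0 and c 1. *)
Definition simple_curve (c : curve) : Prop :=
  continuity (fun s => fst (c s)) /\ continuity (fun s => snd (c s)) /\
  (forall s1 s2, 0 <= s1 <= 1 -> 0 <= s2 <= 1 -> c s1 = c s2 -> s1 = s2).

(* Parameters s 0 < s 1 < ... < s m : the k-th piece (0-based) of the
   partitioned curve g is g([s k, s (k+1)]); the whole curve is g([s 0, s m]). *)
Definition increasing_params (m : nat) (s : nat -> R) : Prop :=
  forall k, (k < m)%nat -> s k < s (S k).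

Definition piece (g : curve) (s : nat -> R) (k : nat) : R * R -> Prop :=
  curve_pts g (s k) (s (S k)).

(* Fan with apex v: curves a 0 .. a (m-1), each simple, with endpoint
   a j 0 = v (the "other endpoint" is a j 1). *)
Definition is_fan (v : R * R) (m : nat) (a : nat -> curve) : Prop :=
  forall j, (j < m)%nat -> simple_curve (a j) /\ a j 0 = v.

Definition grounded (g : curve) (s : nat -> R) (m : nat)
  (v : R * R) (a : nat -> curve) : Prop :=
  ~ curve_pts g (s 0%nat) (s m) v /\
  forall j, (j < m)%nat -> piece g s j (a j 1).

Definition well_grounded (g : curve) (s : nat -> R) (m : nat)
  (v : R * R) (a : nat -> curve) : Prop :=
  grounded g s m v a /\
  forall j, (j < m)%nat -> forall x,
    curve_pts (a j) 0 1 x -> curve_pts g (s 0%nat) (s m) x -> piece g s j x.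

Definition logb (b x : R) : R := ln x / ln b.
Definition iter_log (b : R) (k : nat) (x : R) : R := Nat.iter k (logb b) x.

(* floor as a nat (negative values give 0) *)
Definition floor_nat (x : R) : nat := Z.to_nat (Int_part x).

(* Main.v *)
Require Import Defs.
From Stdlib Require Import Reals Lra Lia List ZArith.
From Stdlib Require Import Classical.
Open Scope R_scope.

Lemma incr_le : forall n u, increasing_params n u ->
  forall i j, (i <= j)%nat -> (j <= n)%nat -> u i <= u j.
Proof.
  intros n u Hu i j Hij Hjn. induction j.
  - assert (i = 0%nat) by lia. subst; lra.
  - destruct (Nat.eq_dec i (S j)). subst; lra.
    assert (u j < u (S j)) by (apply Hu; lia).
    assert (u i <= u j) by (apply IHj; lia). lra.
Qed.

Lemma incr_lt : forall n u, increasing_params n u ->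
  forall i j, (i < j)%nat -> (j <= n)%nat -> u i < u j.
Proof.
  intros n u Hu i j Hij Hjn.
  assert (u i < u (S i)) by (apply Hu; lia).
  assert (u (S i) <= u j) by (apply (incr_le n); auto; lia). lra.
Qed.

Lemma block_free : forall (u : nat -> R) K q (Lr : list R) B0,
  (forall i j, (i <= j)%nat -> (j <= B0 + S q * K)%nat -> u i <= u j) ->
  (length Lr <= q)%nat ->
  exists b, (b <= q)%nat /\ forall x, In x Lr -> ~ (u (B0 + b*K)%nat < x <= u (B0 + b*K + K)%nat).
Proof.
  intros u K q. induction q as [|q IH]; intros Lr B0 Hm Hl.
  - destruct Lr; [|simpl in Hl; lia]. exists 0%nat; split; [lia|]. intros x [].
  - destruct (classic (exists x, In x Lr /\ u (B0 + 0*K)%nat < x <= u (B0 + 0*K + K)%nat)) as [[x [Hx Hb]]|Hn].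
    + set (Lr' := remove Req_EM_T x Lr).
      assert (length Lr' < length Lr)%nat by (apply remove_length_lt; auto).
      destruct (IH Lr' (B0 + K)%nat) as [b [Hb1 Hb2]].
      { intros i j Hij Hj. apply Hm; [lia| nia]. }
      { lia. }
      exists (S b). split; [lia|]. intros y Hy Hyb.
      destruct (Req_EM_T y x) as [->|Hne].
      * assert (u (B0 + K)%nat <= u (B0 + S b * K)%nat) by (apply Hm; nia).
        replace (B0 + 0*K + K)%nat with (B0+K)%nat in Hb by lia. lra.
      * apply (Hb2 y). apply in_in_remove; auto.
        replace (B0 + K + b*K)%nat with (B0 + S b * K)%nat by nia.
        replace (B0 + K + b*K + K)%nat with (B0 + S b * K + K)%nat by nia. auto.
    + exists 0%nat. split; [lia|]. intros x Hx Hb. apply Hn. eauto.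
Qed.

Fixpoint fb (t N : nat) : nat := match N with O => O | S N' => S (t * S (fb t N')) end.

Definition refines (n : nat) (u : nat -> R) (N : nat) (sg : nat -> nat) (w : nat -> R) :=
  (forall k, (k < N)%nat -> (sg k < n)%nat) /\
  (forall k, (S k < N)%nat -> (sg k < sg (S k))%nat) /\
  u 0%nat <= w 0%nat /\ w N <= u n /\ increasing_params N w /\
  (forall k, (k < N)%nat -> w k <= u (sg k) /\ u (S (sg k)) <= w (S k)).

Definition ptsok (t n : nat) (u : nat -> R) (Q : nat -> R -> Prop) :=
  forall k, (k < n)%nat ->
    (exists Lq : list R, (length Lq <= t)%nat /\ forall p, Q k p -> In p Lq) /\
    (exists e, Q k e /\ u k <= e <= u (S k)).

Lemma R_lemma : forall t, (1 <= t)%nat -> forall N n u Q,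
  (fb t N <= n)%nat -> increasing_params n u -> ptsok t n u Q ->
  exists sg w, refines n u N sg w /\
    forall k, (k < N)%nat -> forall p, Q (sg k) p -> w k <= p <= w N -> p <= w (S k).
Proof.
  intros t Ht N. induction N as [|N IH]; intros n u Q Hn Hu HQ.
  - exists (fun k => k), (fun _ => u 0%nat). split.
    + split; [intros; exfalso; lia|]. split; [intros; exfalso; lia|].
      split; [lra|]. split; [apply (incr_le n); auto; lia|].
      split; [intros k Hk; exfalso; lia|]. intros; exfalso; lia.
    + intros; exfalso; lia.
  - simpl in Hn.
    set (K := S (fb t N)) in *.
    destruct (HQ 0%nat ltac:(lia)) as [[Lq [HLq HinLq]] [e [He0 He]]].
    set (Lr := remove Req_EM_T e Lq).
    assert (HLr : (length Lr <= t - 1)%nat).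
    { assert (length Lr < length Lq)%nat by (apply remove_length_lt; auto). lia. }
    destruct (block_free u K (t-1) Lr 1%nat) as [b [Hb Hbf]].
    { intros i j Hij Hj. apply (incr_le n); auto. replace (S (t-1)) with t in Hj by lia. nia. }
    { auto. }
    set (B := (1 + b*K)%nat) in *.
    assert (HBK : (B + K <= n)%nat) by (unfold B; nia).
    destruct (IH (fb t N) (fun k => u (B + k)%nat) (fun k => Q (B + k)%nat)) as [sg' [w' [[R1 [R2 [R3 [R4 [R5 R6]]]]] R7]]].
    { lia. }
    { intros k Hk. replace (B + S k)%nat with (S (B+k)) by lia. apply Hu. unfold K in HBK; lia. }
    { intros k Hk. destruct (HQ (B+k)%nat ltac:(unfold K in HBK; lia)) as [H1 [e' [H2 H3]]].
      split; auto. exists e'. replace (B + S k)%nat with (S (B+k)) by lia. auto. }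
    rewrite Nat.add_0_r in R3.
    assert (HuB : u 1%nat <= u B) by (apply (incr_le n); auto; unfold B; lia).
    assert (Hu01 : u 0%nat < u 1%nat) by (apply Hu; lia).
    assert (HwN : w' N <= u n).
    { assert (u (B + fb t N)%nat <= u n) by (apply (incr_le n); auto; unfold K in HBK; lia). lra. }
    exists (fun k => match k with O => O | S k' => (B + sg' k')%nat end).
    exists (fun k => match k with O => u O | S k' => w' k' end).
    split; [split; [|split; [|split; [|split; [|split]]]]|].
    + intros [|k] Hk; [lia|]. specialize (R1 k ltac:(lia)). unfold K in HBK. lia.
    + intros [|k] Hk. unfold B; lia. specialize (R2 k ltac:(lia)). lia.
    + lra.
    + exact HwN.
    + intros [|k] Hk. lra. apply R5; lia.
    + intros [|k] Hk. split; lra.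
      destruct (R6 k ltac:(lia)) as [A1 A2]. split; auto.
      replace (S (B + sg' k)) with (B + S (sg' k))%nat by lia. auto.
    + intros [|k] Hk p Hp Hpr.
      * destruct (Rle_dec p (u B)) as [Hle|Hgt]; [lra|].
        exfalso. apply (Hbf p).
        -- apply in_in_remove; [intro; subst; lra|]. auto.
        -- fold B. split; [lra|].
           assert (u (B + fb t N)%nat <= u (B + K)%nat) by (apply (incr_le n); auto; unfold K in *; lia).
           lra.
      * apply (R7 k); [lia|auto|auto].
Qed.

Lemma L_lemma : forall t, (1 <= t)%nat -> forall N n u Q,
  (fb t N <= n)%nat -> increasing_params n u -> ptsok t n u Q ->
  exists sg w, refines n u N sg w /\
    forall k, (k < N)%nat -> forall p, Q (sg k) p -> w 0%nat <= p <= w (S k) -> w k <= p.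
Proof.
  intros t Ht N n u Q Hn Hu HQ.
  destruct (R_lemma t Ht N n (fun k => - u (n - k)%nat) (fun k p => Q (n - 1 - k)%nat (- p)))
    as [sg [w [[R1 [R2 [R3 [R4 [R5 R6]]]]] R7]]].
  - auto.
  - intros k Hk. replace (n - k)%nat with (S (n - S k)) by lia.
    assert (u (n - S k)%nat < u (S (n - S k))) by (apply Hu; lia). lra.
  - intros k Hk. destruct (HQ (n-1-k)%nat ltac:(lia)) as [[Lq [H1 H2]] [e [H3 H4]]]. split.
    + exists (map Ropp Lq). split. rewrite length_map; auto.
      intros p Hp. apply H2 in Hp. replace p with (- - p) by ring. apply in_map; auto.
    + exists (-e). split. rewrite Ropp_involutive; auto.
      replace (n - k)%nat with (S (n-1-k)) by lia. replace (n - S k)%nat with (n-1-k)%nat by lia. lra.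
  - exists (fun k => (n - 1 - sg (N - 1 - k))%nat), (fun k => - w (N - k)%nat).
    cbv beta in R3, R4, R6. rewrite Nat.sub_diag in R4. rewrite Nat.sub_0_r in R3.
    split; [split; [|split; [|split; [|split; [|split]]]]|].
    + intros k Hk. specialize (R1 (N-1-k)%nat ltac:(lia)). lia.
    + intros k Hk. replace (N-1-k)%nat with (S (N-1-S k)) by lia.
      specialize (R2 (N-1-S k)%nat ltac:(lia)). specialize (R1 (S (N-1-S k)) ltac:(lia)). lia.
    + rewrite Nat.sub_0_r. lra.
    + rewrite Nat.sub_diag. lra.
    + intros k Hk. replace (N - k)%nat with (S (N - S k)) by lia.
      assert (w (N - S k)%nat < w (S (N - S k))) by (apply R5; lia). lra.
    + intros k Hk. set (a := (N-1-k)%nat).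
      destruct (R6 a ltac:(unfold a; lia)) as [A1 A2]. specialize (R1 a ltac:(unfold a; lia)).
      replace (N - k)%nat with (S a) by (unfold a; lia).
      replace (N - S k)%nat with a by (unfold a; lia).
      replace (n - 1 - sg a)%nat with (n - S (sg a))%nat by lia.
      replace (S (n - S (sg a))) with (n - sg a)%nat by lia. lra.
    + intros k Hk p Hp Hpr. rewrite Nat.sub_0_r in Hpr. set (a := (N-1-k)%nat) in *.
      assert (HH := R7 a ltac:(unfold a; lia) (-p)). cbv beta in HH. rewrite Ropp_involutive in HH.
      specialize (HH Hp).
      replace (N - S k)%nat with a in Hpr by (unfold a; lia).
      replace (N - k)%nat with (S a) by (unfold a; lia). 
      assert (- p <= w (S a)) by (apply HH; lra). lra.
Qed.

Definition state (m : nat) (s : nat -> R) (n : nat) (J : nat -> nat) (u : nat -> R) :=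
  (forall k, (k < n)%nat -> (J k < m)%nat) /\
  (forall k, (S k < n)%nat -> (J k < J (S k))%nat) /\
  0 <= u 0%nat /\ u n <= 1 /\ increasing_params n u /\
  (forall k, (k < n)%nat -> u k <= s (J k) /\ s (S (J k)) <= u (S k)).

Definition WGf (Pi : nat -> R -> Prop) n J (u : nat -> R) :=
  forall k, (k < n)%nat -> forall p, Pi (J k) p -> u 0%nat <= p <= u n -> u k <= p <= u (S k).

Lemma J_mono : forall n (J : nat -> nat), (forall k, (S k < n)%nat -> (J k < J (S k))%nat) ->
  forall i j, (i < j)%nat -> (j < n)%nat -> (J i < J j)%nat.
Proof.
  intros n J HJ i j Hij Hjn. induction j. lia.
  destruct (Nat.eq_dec i j). subst. apply HJ; lia.
  specialize (IHj ltac:(lia) ltac:(lia)). specialize (HJ j Hjn). lia.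
Qed.

Lemma state_refine : forall m s n J u N sg w, state m s n J u -> refines n u N sg w ->
  state m s N (fun k => J (sg k)) w.
Proof.
  intros m s n J u N sg w [S1 [S2 [S3 [S4 [S5 S6]]]]] [R1 [R2 [R3 [R4 [R5 R6]]]]].
  split; [|split; [|split; [|split; [|split]]]].
  - intros k Hk. apply S1. auto.
  - intros k Hk. apply (J_mono n); [auto | apply R2; auto | apply R1; auto].
  - lra.
  - lra.
  - auto.
  - intros k Hk. destruct (R6 k Hk). destruct (S6 (sg k) (R1 k Hk)). split; lra.
Qed.

Lemma WG_refine : forall Pi n J u N sg w, WGf Pi n J u -> refines n u N sg w ->
  WGf Pi N (fun k => J (sg k)) w.
Proof.
  intros Pi n J u N sg w HW [R1 [R2 [R3 [R4 [R5 R6]]]]] k Hk p Hp Hpr.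
  destruct (R6 k Hk). destruct (HW (sg k) (R1 k Hk) p Hp); [lra|]. lra.
Qed.

Lemma state_ptsok : forall t m s Pi n J u, state m s n J u ->
  (forall j, (j < m)%nat -> exists Lq, (length Lq <= t)%nat /\ forall p, Pi j p -> In p Lq) ->
  (forall j, (j < m)%nat -> exists e, Pi j e /\ s j <= e <= s (S j)) ->
  ptsok t n u (fun k => Pi (J k)).
Proof.
  intros t m s Pi n J u [S1 [S2 [S3 [S4 [S5 S6]]]]] HL HE k Hk. split.
  - apply HL; auto.
  - destruct (HE (J k) (S1 k Hk)) as [e [He1 He2]]. exists e. split; auto.
    destruct (S6 k Hk). lra.
Qed.

Lemma fan_step : forall t m s (P : nat -> nat -> R -> Prop) i n J u N,
  (1 <= t)%nat -> state m s n J u ->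
  (forall j, (j < m)%nat -> exists Lq, (length Lq <= t)%nat /\ forall p, P i j p -> In p Lq) ->
  (forall j, (j < m)%nat -> exists e, P i j e /\ s j <= e <= s (S j)) ->
  (fb t (fb t N) <= n)%nat ->
  exists J' w, state m s N J' w /\ WGf (P i) N J' w /\
    (forall i', WGf (P i') n J u -> WGf (P i') N J' w).
Proof.
  intros t m s P i n J u N Ht Hst HL HE Hn.
  assert (Hinc : increasing_params n u) by (apply Hst).
  destruct (R_lemma t Ht (fb t N) n u (fun k => P i (J k)) Hn Hinc (state_ptsok t m s (P i) n J u Hst HL HE))
    as [sg1 [w1 [Hr1 RW]]].
  pose proof (state_refine _ _ _ _ _ _ _ _ Hst Hr1) as Hst1.
  assert (Hinc1 : increasing_params (fb t N) w1) by (apply Hr1).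
  destruct (L_lemma t Ht N (fb t N) w1 (fun k => P i (J (sg1 k))) (le_n _) Hinc1
     (state_ptsok t m s (P i) _ _ _ Hst1 HL HE)) as [sg2 [w2 [Hr2 LW]]].
  exists (fun k => J (sg1 (sg2 k))), w2. split; [|split].
  - exact (state_refine _ _ _ _ _ _ _ _ Hst1 Hr2).
  - intros k Hk p Hp Hpr.
    destruct Hr2 as [R1 [R2 [R3 [R4 [R5 R6]]]]].
    destruct (Rle_dec p (w2 (S k))) as [Hle|Hgt].
    + split; auto. apply (LW k Hk p Hp). lra.
    + exfalso. destruct (R6 k Hk) as [A1 A2].
      assert (w1 (sg2 k) < w1 (S (sg2 k))) by (apply Hinc1; apply R1; auto).
      assert (p <= w1 (S (sg2 k))) by (apply (RW (sg2 k)); [apply R1; auto|auto|lra]).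
      lra.
  - intros i' HW. apply (WG_refine _ _ _ _ _ _ _ (WG_refine _ _ _ _ _ _ _ HW Hr1) Hr2).
Qed.

Lemma fb_mono : forall t N1 N2, (1 <= t)%nat -> (N1 <= N2)%nat -> (fb t N1 <= fb t N2)%nat.
Proof. intros t N1 N2 Ht H. induction H; auto. simpl. nia. Qed.

Lemma fb_pow : forall t N, (1 <= t)%nat -> (fb t N <= (S t)^N)%nat.
Proof.
  intros t N Ht. induction N. simpl; lia.
  simpl fb. destruct N. simpl. lia.
  assert (S t <= (S t)^(S N))%nat.
  { change ((S t)^(S N))%nat with (S t * (S t)^N)%nat.
    pose proof (Nat.pow_nonzero (S t) N ltac:(lia)). nia. }
  change ((S t)^(S (S N)))%nat with (S t * (S t)^(S N))%nat. nia.
Qed.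

Lemma all_fans : forall t l m s (P : nat -> nat -> R -> Prop) n0 J0 u0 r,
  (1 <= t)%nat -> state m s n0 J0 u0 ->
  (forall i j, (i < l)%nat -> (j < m)%nat -> exists Lq, (length Lq <= t)%nat /\ forall p, P i j p -> In p Lq) ->
  (forall i j, (i < l)%nat -> (j < m)%nat -> exists e, P i j e /\ s j <= e <= s (S j)) ->
  (Nat.iter (2*l) (Nat.pow (S t)) r <= n0)%nat ->
  exists J w, state m s r J w /\ forall i, (i < l)%nat -> WGf (P i) r J w.
Proof.
  intros t l m s P n0 J0 u0 r Ht Hst HL HE Hn.
  assert (H : forall c, (c <= l)%nat -> exists n J u, state m s n J u /\
     (Nat.iter (2*(l-c)) (Nat.pow (S t)) r <= n)%nat /\ forall i, (i < c)%nat -> WGf (P i) n J u).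
  { induction c as [|c IH]; intros Hc.
    - exists n0, J0, u0. split; auto. split. rewrite Nat.sub_0_r; auto. intros; lia.
    - destruct (IH ltac:(lia)) as [n [J [u [Hs [Hb HW]]]]].
      replace (2*(l-c))%nat with (S (S (2*(l - S c)))) in Hb by lia.
      set (N := Nat.iter (2*(l - S c)) (Nat.pow (S t)) r) in *.
      change (S t ^ (S t ^ N) <= n)%nat in Hb.
      assert (Hf : (fb t (fb t N) <= n)%nat).
      { pose proof (fb_pow t N Ht). pose proof (fb_mono t _ _ Ht H).
        pose proof (fb_pow t ((S t)^N) Ht). lia. }
      destruct (fan_step t m s P c n J u N Ht Hs (fun j => HL c j ltac:(lia)) (fun j => HE c j ltac:(lia)) Hf)
        as [J' [w [Hs' [HW' Hp]]]].
      exists N, J', w. split; auto. split; auto.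
      intros i Hi. destruct (Nat.eq_dec i c). subst; auto. apply Hp. apply HW. lia. }
  destruct (H l (le_n _)) as [n [J [u [Hs [Hb HW]]]]].
  rewrite Nat.sub_diag in Hb. simpl in Hb.
  assert (Hr : refines n u r (fun k => k) u).
  { destruct Hs as [_ [_ [_ [_ [Hi _]]]]].
    split; [|split; [|split; [|split; [|split]]]]; try (intros; lia); try lra.
    - apply (incr_le n); auto.
    - intros k Hk. apply Hi. lia.
    - intros k Hk. lra. }
  exists (fun k => J k), u. split.
  - exact (state_refine _ _ _ _ _ _ _ _ Hs Hr).
  - intros i Hi. exact (WG_refine _ _ _ _ _ _ _ (HW i Hi) Hr).
Qed.

Lemma ln_nonpos : forall y, y <= 0 -> ln y = 0.
Proof. intros y Hy. unfold ln. case (Rlt_dec 0 y); [intros; exfalso; lra|auto]. Qed.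

Lemma log_tower : forall t k x (n : nat), (1 <= t)%nat -> (1 <= n)%nat ->
  INR n <= iter_log (INR (t+1)) k x -> INR (Nat.iter k (Nat.pow (S t)) n) <= x.
Proof.
  intros t k x. induction k; intros n Ht Hn H.
  - simpl. exact H.
  - rewrite Nat.iter_succ_r. apply IHk; auto.
    { pose proof (Nat.pow_nonzero (S t) n ltac:(lia)). lia. }
    set (y := iter_log (INR (t + 1)) k x) in *.
    change (iter_log (INR (t+1)) (S k) x) with (logb (INR (t+1)) y) in H.
    unfold logb in H.
    replace (t+1)%nat with (S t) in H by lia.
    assert (Hb : 2 <= INR (S t)). { rewrite S_INR. apply le_INR in Ht. simpl in Ht. lra. }
    assert (Hlb : 0 < ln (INR (S t))). { rewrite <- ln_1. apply ln_increasing; lra. }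
    assert (Hn1 : 1 <= INR n). { apply le_INR in Hn. simpl in Hn. lra. }
    assert (Hly : INR n * ln (INR (S t)) <= ln y).
    { apply Rmult_le_reg_r with (/ ln (INR (S t))). apply Rinv_0_lt_compat; auto.
      rewrite Rmult_assoc, Rinv_r by lra. rewrite Rmult_1_r. exact H. }
    assert (Hy : 1 < y).
    { destruct (Rle_dec y 0) as [r0|r0]. rewrite (ln_nonpos y r0) in Hly. nra.
      destruct (Rle_dec y 1); [|lra].
      destruct (Req_dec y 1). rewrite H0, ln_1 in Hly. nra.
      assert (ln y < ln 1) by (apply ln_increasing; lra). rewrite ln_1 in H1. nra. }
    rewrite pow_INR. rewrite <- Rpower_pow by lra. unfold Rpower.
    rewrite <- (exp_ln y) by lra.
    destruct (Req_dec (INR n * ln (INR (S t))) (ln y)) as [E|E].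
    + rewrite E; lra.
    + left. apply exp_increasing. lra.
Qed.

Lemma param_list : forall (g : curve) (Pr : R -> Prop) (L : list (R*R)),
  (forall s1 s2, 0 <= s1 <= 1 -> 0 <= s2 <= 1 -> g s1 = g s2 -> s1 = s2) ->
  (forall p, 0 <= p <= 1 -> Pr p -> In (g p) L) ->
  exists Lp, (length Lp <= length L)%nat /\ forall p, 0 <= p <= 1 -> Pr p -> In p Lp.
Proof.
  intros g Pr L Hinj. revert Pr. induction L as [|x L IH]; intros Pr HP.
  - exists nil. split; [simpl; lia|]. intros p Hp HPp. destruct (HP p Hp HPp).
  - destruct (classic (exists p0, 0 <= p0 <= 1 /\ Pr p0 /\ g p0 = x)) as [[p0 [Hp0 [HPr Hg]]]|Hno].
    + destruct (IH (fun p => Pr p /\ p <> p0)) as [Lp [H1 H2]].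
      { intros p Hp [HPp Hne]. destruct (HP p Hp HPp) as [Heq|Hin]; auto.
        exfalso; apply Hne. apply Hinj; auto; congruence. }
      exists (p0 :: Lp). split; simpl; [lia|]. intros p Hp HPp.
      destruct (Req_EM_T p0 p); [left; auto | right; apply H2; auto].
    + destruct (IH Pr) as [Lp [H1 H2]].
      { intros p Hp HPp. destruct (HP p Hp HPp) as [Heq|Hin]; auto. exfalso; apply Hno; eauto. }
      exists Lp; split; simpl; [lia|auto].
Qed.

Theorem mainTheorem7 :
  forall (t l m : nat) (g : curve) (s : nat -> R)
         (v : nat -> R * R) (a : nat -> nat -> curve),
  (1 <= t)%nat -> (1 <= l)%nat ->
  simple_curve g ->
  s 0%nat = 0 -> s m = 1 -> increasing_params m s ->
  (forall i, (i < l)%nat -> is_fan (v i) m (a i) /\ grounded g s m (v i) (a i)) ->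
  (forall i j, (i < l)%nat -> (j < m)%nat ->
     exists L : list (R * R), (length L <= t)%nat /\
       forall x, curve_pts (a i j) 0 1 x -> curve_pts g 0 1 x -> In x L) ->
  let r := floor_nat (iter_log (INR (t + 1)) (2 * l) (INR m)) in
  exists (J : nat -> nat) (u : nat -> R),
    (forall k, (k < r)%nat -> (J k < m)%nat) /\
    (forall k, (S k < r)%nat -> (J k < J (S k))%nat) /\
    0 <= u 0%nat /\ u r <= 1 /\ increasing_params r u /\
    (forall i, (i < l)%nat -> well_grounded g u r (v i) (fun k => a i (J k))) /\
    (forall k, (k < r)%nat -> forall x, piece g s (J k) x -> piece g u k x).
Proof.
  intros t l m g s v a Ht Hl Hg Hs0 Hsm Hsi Hfan Hcnt r.
  set (P := fun i j p => 0 <= p <= 1 /\ curve_pts (a i j) 0 1 (g p)).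
  assert (Hlist : forall i j, (i<l)%nat -> (j<m)%nat -> exists Lq, (length Lq <= t)%nat /\ forall p, P i j p -> In p Lq).
  { intros i j Hi Hj. destruct (Hcnt i j Hi Hj) as [L [HL HL2]].
    destruct Hg as [_ [_ Hinj]].
    destruct (param_list g (fun p => curve_pts (a i j) 0 1 (g p)) L Hinj) as [Lp [H1 H2]].
    { intros p Hp Hc. apply HL2; auto. exists p; split; auto. }
    exists Lp; split; [lia|]. intros p [Hp Hc]. apply H2; auto. }
  assert (Hend : forall i j, (i<l)%nat -> (j<m)%nat -> exists e, P i j e /\ s j <= e <= s (S j)).
  { intros i j Hi Hj. destruct (Hfan i Hi) as [_ [_ Hgr]]. destruct (Hgr j Hj) as [e [He Hge]].
    exists e. split; [|auto]. split.
    - assert (s 0%nat <= s j) by (apply (incr_le m); auto; lia).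
      assert (s (S j) <= s m) by (apply (incr_le m); auto; lia). lra.
    - exists 1. split; [lra|]. auto. }
  assert (Hr : r = 0%nat \/ (Nat.iter (2*l) (Nat.pow (S t)) r <= m)%nat).
  { destruct (Nat.eq_dec r 0) as [E|E]; [left; auto|right].
    apply INR_le. apply log_tower; [auto|lia|].
    unfold r, floor_nat in *.
    set (X := iter_log (INR (t + 1)) (2 * l) (INR m)) in *.
    destruct (base_Int_part X) as [B1 B2].
    assert (Hz : (0 <= Int_part X)%Z) by lia.
    rewrite INR_IZR_INZ, Z2Nat.id by auto. auto. }
  clearbody r.
  destruct Hr as [Hr0|Hr].
  { subst r. exists (fun k => k), (fun _ => 0).
    split; [intros; exfalso; lia|]. split; [intros; exfalso; lia|].
    split; [lra|]. split; [lra|]. split; [intros k Hk; exfalso; lia|].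
    split; [|intros; exfalso; lia].
    intros i Hi. split; [split|].
    - intros [p [Hp Hgp]]. destruct (Hfan i Hi) as [_ [Hv _]]. apply Hv.
      exists p. rewrite Hs0, Hsm. split; [lra|auto].
    - intros; exfalso; lia.
    - intros; exfalso; lia. }
  assert (Hst0 : state m s m (fun k => k) s).
  { split; [|split; [|split; [|split; [|split]]]]; try (intros; lia); try lra; auto.
    intros k Hk; lra. }
  destruct (all_fans t l m s P m (fun k => k) s r Ht Hst0 Hlist Hend Hr) as [J [w [Hst HW]]].
  destruct Hst as [S1 [S2 [S3 [S4 [S5 S6]]]]].
  exists J, w. split; [auto|]. split; [auto|]. split; [auto|]. split; [auto|]. split; [auto|].
  split.
  - intros i Hi. destruct (Hfan i Hi) as [_ [Hv Hgr]]. split; [split|].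
    + intros [p [Hp Hgp]]. apply Hv. exists p. rewrite Hs0, Hsm. split; [lra|auto].
    + intros k Hk. destruct (Hgr (J k) (S1 k Hk)) as [e [He Hge]].
      destruct (S6 k Hk). exists e. split; [lra|auto].
    + intros k Hk x Hx [p [Hp Hgp]]. subst x.
      destruct (HW i Hi k Hk p) as [A1 A2].
      * split; [lra|auto].
      * auto.
      * exists p. split; [lra|auto].
  - intros k Hk x [p [Hp Hgp]]. destruct (S6 k Hk). exists p. split; [lra|auto].
Qed.
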